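(* Let $r \geq 2$ and $n \geq 1$ be integers. Let $G$ be a $2$-central group generated by $r$ elements and of exponent $2^n$. Then $G$ is a homomorphic image of ${}^{\lceil n/2 \rceil + 1} G_r$. Moreover, any finite $2$-group generated by $r$ elements is a homomorphic image of ${}^m G_r$ for some positive integer $m$.
   Context: For a group $H$ and integer $m$, $H^m$ denotes the subgroup generated by all $m$-th powers. The $\bar\lambda$-series of a group $G$ is defined by $\bar\lambda_1(G) = G$ and $\bar\lambda_{k+1}(G) = \bar\lambda_k(G)^4[\bar\lambda_k(G), G]$. For $r \geq 2$ and $m \geq 1$, ${}^m G_r = F_r/\bar\lambda_{m+1}(F_r)$ where $F_r$ is the free group of rank $r$. For a finite $2$-group $G$, $\Omega_i(G)$ is the subgroup generated by the elements of order dividing $2^i$; $G$ is called $2$-central if $\Omega_2(G) \leq Z(G)$. *)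

(* Defs.v *)
From HB Require Import structures.
From mathcomp Require Import all_boot all_fingroup all_solvable.
Set Implicit Arguments. Unset Strict Implicit. Unset Printing Implicit Defensive.
Import GroupScope.

(* The free group F_r, represented by (unreduced) words in the letters
   x_i^{+1} (false) and x_i^{-1} (true), i : 'I_r.  Free reduction is not
   quotiented out: subgroups of F_r are represented by sets of words closed
   under the group operations, and homomorphisms F_r -> G by evaluation of
   words at an r-tuple of images of the generators. *)
Definition word (r : nat) := seq ('I_r * bool).

Definition winv r (w : word r) : word r := rev (map (fun a => (a.1, ~~ a.2)) w).
Definition wcomm r (w u : word r) : word r := winv w ++ winv u ++ w ++ u.
Definition wpow4 r (w : word r) : word r := w ++ w ++ w ++ w.

Inductive in_gen r (S : word r -> Prop) : word r -> Prop :=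
| gen_base w : S w -> in_gen S w
| gen_nil : in_gen S [::]
| gen_inv w : in_gen S w -> in_gen S (winv w)
| gen_cat w u : in_gen S w -> in_gen S u -> in_gen S (w ++ u).

(* bar-lambda series of F_r:  lambda_bar r 1 = F_r,
   lambda_bar r (k+1) = lambda_bar r k ^4 [lambda_bar r k, F_r]
   (the subgroup generated by 4th powers of elements of lambda_k and by
   commutators [v, u] with v in lambda_k, u in F_r).  Convention
   lambda_bar r 0 = F_r (unused). *)
Fixpoint lambda_bar r (k : nat) : word r -> Prop :=
  match k with
  | 0 => fun _ => True
  | k'.+1 =>
    match k' with
    | 0 => fun _ => True
    | _ => in_gen (fun w => (exists v, @lambda_bar r k' v /\ w = wpow4 v)
                   \/ (exists v u, @lambda_bar r k' v /\ w = wcomm v u))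
    end
  end.

Definition weval (gT : finGroupType) r (g : 'I_r -> gT) (w : word r) : gT :=
  foldr (fun a x => (if a.2 then (g a.1)^-1 else g a.1) * x) 1 w.

Definition r_generated (gT : finGroupType) (r : nat) (G : {set gT}) : Prop :=
  exists g : 'I_r -> gT, G = <<[set g i | i : 'I_r]>>.

(* G is a homomorphic image of  ^m G_r = F_r / lambda_bar_{m+1}(F_r):
   there is a homomorphism F_r -> gT (given by the images g i of the free
   generators) with image G whose kernel contains lambda_bar_{m+1}(F_r). *)
Definition hom_image_mGr (gT : finGroupType) (r m : nat) (G : {set gT}) : Prop :=
  exists g : 'I_r -> gT,
    G = <<[set g i | i : 'I_r]>> /\
    (forall w, @lambda_bar r m.+1 w -> weval g w = 1).

Definition two_central (gT : finGroupType) (G : {group gT}) : Prop :=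
  2.-group G /\ 'Ohm_2(G) \subset 'Z(G).

(* Main.v *)
Require Import Defs.
From mathcomp Require Import all_boot all_fingroup all_solvable.
From mathcomp Require Import zify.
Set Implicit Arguments. Unset Strict Implicit. Unset Printing Implicit Defensive.
Import GroupScope.


Section W.
Variables (gT : finGroupType) (r : nat) (g : 'I_r -> gT).

Lemma weval_cat (w u : word r) : weval g (w ++ u) = weval g w * weval g u.
Proof. by elim: w => [|a w IH] /=; rewrite ?mul1g // IH mulgA. Qed.

Lemma weval_inv (w : word r) : weval g (winv w) = (weval g w)^-1.
Proof.
elim: w => [|a w IH] /=; first by rewrite invg1.
rewrite /winv map_cons rev_cons -cats1 weval_cat -/(winv w) IH /= mulg1 invMg.
by case: a.2; rewrite ?invgK.
Qed.

Lemma weval_comm (w u : word r) : weval g (wcomm w u) = [~ weval g w, weval g u].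
Proof. by rewrite /wcomm !weval_cat !weval_inv /commg /conjg !mulgA. Qed.

Lemma weval_pow4 (w : word r) : weval g (wpow4 w) = weval g w ^+ 4.
Proof. by rewrite /wpow4 !weval_cat !expgS expg0 mulg1 !mulgA. Qed.

Lemma weval_gen (H : {group gT}) (S : word r -> Prop) :
  (forall w, S w -> weval g w \in H) -> forall w, in_gen S w -> weval g w \in H.
Proof.
move=> hS w; elim=> {w} [w /hS //| |w _ IH|w u _ IH1 _ IH2].
- by rewrite group1.
- by rewrite weval_inv groupV.
- by rewrite weval_cat groupM.
Qed.

Lemma weval_mem (G : {group gT}) w : (forall i, g i \in G) -> weval g w \in G.
Proof.
move=> hg; elim: w => [|a w IH] /=; first exact: group1.
by rewrite groupM //; case: a.2; rewrite ?groupV.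
Qed.
End W.

Lemma weval_morph (aT rT : finGroupType) (D : {group aT}) (f : {morphism D >-> rT})
   r (g : 'I_r -> aT) w : (forall i, g i \in D) -> weval (fun i => f (g i)) w = f (weval g w).
Proof.
move=> hg; elim: w => [|a w IH] /=; first by rewrite morph1.
rewrite IH morphM ?weval_mem //; last by case: a.2; rewrite ?groupV.
by case: a.2; rewrite ?morphV.
Qed.

Lemma lamstep (gT : finGroupType) (G H : {group gT}) r (g : 'I_r -> gT) j :
  H \subset 'Z(G) -> (forall h, h \in H -> h ^+ 4 = 1) -> (forall i, g i \in G) ->
  (forall w, @lambda_bar r j.+1 w -> weval g w \in H) ->
  forall w, @lambda_bar r j.+2 w -> weval g w = 1.
Proof.
move=> sHZ h4 hg hj w hw; apply/set1gP.
apply: (weval_gen (H := [1 gT]%G)) hw => {}w [[v [hv ->]]|[v [u [hv ->]]]].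
  by rewrite weval_pow4 h4 ?hj // set11.
rewrite weval_comm; apply/set1gP; apply/eqP/commgP.
have /centerP[_ c] := subsetP sHZ _ (hj _ hv).
apply: c; exact: weval_mem.
Qed.

Lemma liftO (gT : finGroupType) (G H : {group gT}) r (g : 'I_r -> gT) (P : word r -> Prop) :
  H <| G -> (forall i, g i \in G) ->
  (forall w, P w -> weval (fun i => coset H (g i)) w = 1) ->
  forall w, P w -> weval g w \in H.
Proof.
move=> /andP[sHG nHG] hg hP w /hP.
have hN i : g i \in 'N(H) by apply: (subsetP nHG).
rewrite (weval_morph (coset_morphism H)) //.
apply: coset_idr; apply: (subsetP nHG); exact: weval_mem.
Qed.

Section TC.
Variables (gT : finGroupType) (G : {group gT}).
Hypothesis tcG : two_central G.

Lemma tc_ohm : 'Ohm_2(G) = 'Ldiv_4(G).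
Proof.
case: tcG => pG sOZ; apply: (OhmEabelian pG).
exact: abelianS sOZ (center_abelian G).
Qed.

Lemma tc_cent x : x \in G -> x ^+ 4 = 1 -> x \in 'Z(G).
Proof.
move=> Gx x4; case: tcG => _ sOZ; apply: (subsetP sOZ).
by rewrite tc_ohm; apply/LdivP.
Qed.

Lemma lemA c x d : c \in G -> x \in G -> d \in 'Z(G) -> d ^+ 2 = 1 ->
  c ^ x = d * c^-1 -> c ^+ 4 = 1.
Proof.
move=> Gc Gx Zd d2 cx; case: tcG => pG _.
have [k ok] := p_natP (mem_p_elt pG Gc).
have [le2|] := leqP k 2.
  by apply/eqP; rewrite -order_dvdn ok (dvdn_exp2l 2 le2).
case: k ok => [|[|[|b]]] // ok _.
set e := c ^+ (2 ^ b.+1).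
have Ge : e \in G by rewrite groupX.
have e4 : e ^+ 4 = 1.
  by rewrite -expgM -(expg_order c) ok -[4%N]/(2^2)%N -expnD addn2.
have Ze := tc_cent Ge e4.
have cdc : commute d c^-1.
  by case/centerP: Zd => _ h; apply: h; rewrite groupV.
have ex : e ^ x = e^-1.
  rewrite /e conjXg cx expgMn // expgVn -[RHS]mul1g; congr (_ * _).
  by rewrite expnS expgM d2 expg1n.
have ex2 : e ^ x = e.
  apply/conjg_fixP/commgP; case/centerP: Ze => _ h; exact: h.
have : e ^+ 2 = 1 by rewrite expgS expg1 -{2}ex2 ex mulgV.
rewrite /e -expgM -expnSr => /eqP; rewrite -order_dvdn ok => /(dvdn_leq _).
by rewrite expn_gt0 leq_exp2l // ltnn => /(_ isT).
Qed.


Lemma comm2 t y : t \in G -> y \in G -> t ^+ 2 \in 'Z(G) ->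
  [~ t, y] \in 'Z(G) /\ [~ t, y] ^+ 2 = 1.
Proof.
move=> Gt Gy Zt2; set c := [~ t, y].
have Gc : c \in G by rewrite groupR.
have h1 : [~ t ^+ 2, y] = 1.
  by apply/eqP/commgP; case/centerP: Zt2 => _ h; apply: h.
have ct : c ^ t = c^-1.
  by rewrite -(mul1g c^-1) -h1 expgS expg1 commMgJ mulgK.
have c4 : c ^+ 4 = 1.
  by apply: (lemA Gc Gt (group1 _) (expg1n _ _)); rewrite mul1g.
have Zc := tc_cent Gc c4; split=> //.
have ct2 : c ^ t = c by apply/conjg_fixP/commgP; case/centerP: Zc => _ h; apply: h.
by rewrite expgS expg1 -{2}ct2 ct mulgV.
Qed.

Lemma core x y : x \in G -> y \in G -> (x ^+ 4) ^+ 4 = 1 -> [~ x, y] ^+ 4 = 1.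
Proof.
move=> Gx Gy x16.
have Zx4 : (x ^+ 2) ^+ 2 \in 'Z(G) by rewrite -expgM; apply: tc_cent; rewrite ?groupX.
have [Zd d2] := comm2 (groupX 2 Gx) Gy Zx4.
apply: (lemA (groupR Gx Gy) Gx Zd d2).
by rewrite expgS expg1 commMgJ mulgK.
Qed.

End TC.

Lemma tc_quo (gT : finGroupType) (G : {group gT}) :
  two_central G -> two_central (G / 'Ohm_2(G)).
Proof.
move=> tcG; have [pG _] := tcG; split; first exact: quotient_pgroup.
have nOG : G \subset 'N('Ohm_2(G)) by case/andP: (Ohm_normal 2 G).
rewrite (OhmE _ (quotient_pgroup _ pG)) gen_subG; apply/subsetP=> xb /LdivP[Gxb xb4].
have /morphimP[x Nx Gx def] := Gxb; subst xb.
have x4O : x ^+ 4 \in 'Ohm_2(G).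
  by apply: coset_idr; rewrite ?groupX // morphX.
have x16 : (x ^+ 4) ^+ 4 = 1 by move: x4O; rewrite tc_ohm // => /LdivP[].
apply/centerP; split=> // yb /morphimP[y Ny Gy ->].
rewrite /commute -!morphM // commgC; apply: coset_kerr.
suff h : [~ x, y] \in 'Ohm_2(G) by exact: h.
rewrite tc_ohm //; apply/LdivP; split; first exact: groupR.
by apply: (core tcG).
Qed.


Lemma part1 k : forall (gT : finGroupType) (G : {group gT}),
  two_central G -> exponent G %| 4 ^ k ->
  forall r (g : 'I_r -> gT), (forall i, g i \in G) ->
  forall j, k <= j -> forall w, @lambda_bar r j.+1 w -> weval g w = 1.
Proof.
elim: k => [|k IH] gT G tcG eG r g hg j lej w hw.
  by rewrite -(expg1 (weval g w)); apply: (exponentP eG); apply: weval_mem.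
case: j lej hw => [|j] // lej hw.
have nOG : 'Ohm_2(G) <| G := Ohm_normal 2 G.
have sNO : G \subset 'N('Ohm_2(G)) by case/andP: nOG.
have eQ : exponent (G / 'Ohm_2(G)) %| 4 ^ k.
  apply/exponentP=> xb /morphimP[x Nx Gx ->]; rewrite -morphX //.
  apply: coset_id; rewrite tc_ohm //; apply/LdivP; split; first by rewrite groupX.
  by rewrite -expgM -expnSr; apply: (exponentP eG).
have hg' i : coset 'Ohm_2(G) (g i) \in G / 'Ohm_2(G) by rewrite mem_quotient.
have IH' := IH _ _ (tc_quo tcG) eQ r _ hg' j lej.
have hO := liftO nOG hg IH'.
case: (tcG) => pG sOZ.
apply: (lamstep sOZ _ hg hO hw).
move=> h hh; have : h \in 'Ldiv_4(G) by rewrite -(tc_ohm (conj pG sOZ)).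
by case/LdivP.
Qed.

Lemma part2 N : forall (gT : finGroupType) (G : {group gT}),
  #|G| < N -> 2.-group G ->
  forall r (g : 'I_r -> gT), (forall i, g i \in G) ->
  exists m, 0 < m /\ forall w, @lambda_bar r m.+1 w -> weval g w = 1.
Proof.
elim: N => [//|N IH] gT G ltG pG r g hg.
have [G1|ntG] := eqVneq G 1%G.
  exists 1%N; split=> // w _; have := weval_mem w hg.
  by rewrite G1 => /set1gP.
have ntZ : 'Z(G) != 1.
  apply/eqP=> Z1; move/eqP: ntG; apply; apply/val_inj => /=.
  exact: trivg_center_pgroup pG Z1.
have pZ : 2.-group 'Z(G) := pgroupS (center_sub G) pG.
have [pr2 dvZ _] := pgroup_pdiv pZ ntZ.
have [z Zz oz] := Cauchy pr2 dvZ.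
have sZ : <[z]> \subset 'Z(G) by rewrite cycle_subG.
have nZG : <[z]> <| G := sub_center_normal sZ.
have sZG : <[z]> \subset G by case/andP: nZG.
have ntz : <[z]>%G :!=: 1.
  by rewrite cycle_eq1 -order_eq1 oz.
have ltQ : #|G / <[z]>| < N.
  by rewrite -ltnS; apply: leq_trans ltG; apply: ltn_quotient.
have hg' i : coset <[z]> (g i) \in G / <[z]> by rewrite mem_quotient.
have [m [m0 hm]] := IH _ _ ltQ (quotient_pgroup _ pG) r _ hg'.
have hZ := liftO nZG hg hm.
exists m.+1; split=> //.
apply: (lamstep sZ _ hg hZ).
move=> h /cycleP[i ->].
have z2 : z ^+ 2 = 1 by rewrite -oz expg_order.
by rewrite -expgM mulnC expgM -[4%N]/(2 * 2)%N expgM z2 !expg1n.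
Qed.

Theorem mainTheorem2 (r n : nat) :
  (2 <= r)%N -> (1 <= n)%N ->
  (forall (gT : finGroupType) (G : {group gT}),
      two_central G -> r_generated r G -> exponent G = (2 ^ n)%N ->
      hom_image_mGr r (uphalf n).+1 G) /\
  (forall (gT : finGroupType) (G : {group gT}),
      2.-group G -> r_generated r G ->
      exists m, (0 < m)%N /\ hom_image_mGr r m G).
Proof.
move=> _ _; split.
  move=> gT G tcG [g defG] eG; exists g; split=> //.
  have hg i : g i \in G by rewrite defG mem_gen // imset_f.
  apply: (part1 tcG _ hg (leqnSn _)).
  rewrite eG -[4%N]/(2 ^ 2)%N -expnM dvdn_exp2l //.
  have := odd_double_half n; rewrite uphalf_half -addnn; case: (odd n) => /=; lia.
move=> gT G pG [g defG].
have hg i : g i \in G by rewrite defG mem_gen // imset_f.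
have [m [m0 hm]] := part2 (ltnSn #|G|) pG hg.
by exists m; split=> //; exists g.
Qed.
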